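(* Let $p\in P$ and consider $F_p$ extended to the one-point compactification $S^3=\mathbb{R}^3\cup\{\infty\}$ by declaring $\infty$ a fixed point. Then $F_p$ is not $C^1$ at $\infty$.
   Context: For $p=(a,b,c)\in\mathbb{R}^3$, $F_p$ is the Rössler vector field $\dot x=-y-z,\ \dot y=x+ay,\ \dot z=bx+z(x-c)$ on $\mathbb{R}^3$. $P\subseteq\mathbb{R}^3$ is an open set of parameters such that for every $p=(a,b,c)\in P$: $a,b\in(0,1)$, $c>1$; $F_p$ has exactly two fixed points $P_{In}=(0,0,0)$ and $P_{Out}=(c-ab,b-\frac{c}{a},\frac{c}{a}-b)$, both saddle-foci, $P_{In}$ with one-dimensional stable manifold and $P_{Out}$ with one-dimensional unstable manifold; and at least one of the saddle indices at $P_{In},P_{Out}$ is $<1$. *)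

(* Defs.v *)
From HB Require Import structures.
From mathcomp Require Import all_boot all_order all_algebra.
From mathcomp Require Import all_classical all_reals all_analysis.
Set Implicit Arguments. Unset Strict Implicit. Unset Printing Implicit Defensive.
Import Order.TTheory GRing.Theory Num.Theory.
Import numFieldNormedType.Exports.
Local Open Scope classical_set_scope.
Local Open Scope ring_scope.

Section Rossler.
Variable R : realType.
Notation V := 'rV[R]_3.

Definition cx (u : V) : R := u 0 0.
Definition cy (u : V) : R := u 0 1.
Definition cz (u : V) : R := u 0 2%:R.

Definition mkv (e1 e2 e3 : R) : V := \row_(j < 3) nth 0 [:: e1; e2; e3] j.

Definition rossler (a b c : R) (u : V) : V :=
  mkv (- cy u - cz u) (cx u + a * cy u) (b * cx u + cz u * (cx u - c)).

Definition rossler_jac (a b c : R) (u : V) : 'M[R]_3 :=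
  \matrix_(i < 3, j < 3)
    nth 0 (nth [::] [:: [:: 0; -1; -1];
                         [:: 1; a; 0];
                         [:: b + cz u; 0; cx u - c]] i) j.

Definition P_In : V := mkv 0 0 0.
Definition P_Out (a b c : R) : V := mkv (c - a * b) (b - c / a) (c / a - b).

(* Saddle-focus with one-dimensional stable manifold: eigenvalues
   gamma < 0 (real) and rho +- i omega with rho > 0, omega <> 0.
   Its saddle index is nu = |rho| / |gamma|. *)
Definition saddle_focus_stable1 (J : 'M[R]_3) (nu : R) : Prop :=
  exists gam rho om : R,
    [/\ gam < 0, 0 < rho, om != 0,
        char_poly J = ('X - gam%:P) * (('X - rho%:P) ^+ 2 + (om ^+ 2)%:P)
      & nu = rho / (- gam)].

Definition saddle_focus_unstable1 (J : 'M[R]_3) (nu : R) : Prop :=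
  exists gam rho om : R,
    [/\ 0 < gam, rho < 0, om != 0,
        char_poly J = ('X - gam%:P) * (('X - rho%:P) ^+ 2 + (om ^+ 2)%:P)
      & nu = (- rho) / gam].

Definition rossler_param_ok (p : R * R * R) : Prop :=
  let: (a, b, c) := p in
  [/\ 0 < a < 1, 0 < b < 1, 1 < c,
      ((forall u : V, rossler a b c u = 0 <-> (u = P_In \/ u = P_Out a b c)) /\
      P_In <> P_Out a b c) &
      exists nuIn nuOut : R,
        [/\ saddle_focus_stable1 (rossler_jac a b c P_In) nuIn,
            saddle_focus_unstable1 (rossler_jac a b c (P_Out a b c)) nuOut &
            (nuIn < 1 \/ nuOut < 1)]].

(* Euclidean squared norm and the inversion chart of S^3 = R^3 u {oo}
   around oo:  y = x / |x|^2  (oo corresponds to y = 0). *)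
Definition sqnorm (u : V) : R := \sum_(j < 3) u 0 j ^+ 2.
Definition inversion (u : V) : V := (sqnorm u)^-1 *: u.

(* The extension of a vector field F on R^3 to S^3 (oo a fixed point),
   expressed in the chart at oo: pushforward of F by the inversion on
   y <> 0, and 0 at y = 0. *)
Definition field_at_infinity (F : V -> V) (y : V) : V :=
  if y == 0 then 0 else 'd inversion (inversion y) (F (inversion y)).

(* f is C^1 near a: differentiable on an open neighbourhood U of a with
   derivative depending continuously on the point (checked on each
   direction v, which in finite dimension is the same as operator-norm
   continuity). *)
Definition C1_at (f : V -> V) (a : V) : Prop :=
  exists U : set V,
    [/\ open U, U a,
        (forall x, U x -> differentiable f x) &
        (forall (v : V) (x : V), U x ->
           (fun w => 'd f w v) @ x --> 'd f x v)].

End Rossler.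

(* Main.v *)
Require Import Defs.
From HB Require Import structures.
From mathcomp Require Import all_boot all_order all_algebra.
From mathcomp Require Import all_classical all_reals all_analysis.
From mathcomp Require Import ring lra.
Import Order.TTheory GRing.Theory Num.Theory.
Import numFieldNormedType.Exports.
Local Open Scope classical_set_scope.
Local Open Scope ring_scope.

Section S.
Variable R : realType.
Notation V := 'rV[R]_3.

Lemma sqnormE : sqnorm (R:=R) = \sum_(j < 3) (fun u : V => u 0 j) ^+ 2.
Proof. by apply/funext => u; rewrite fct_sumE /sqnorm. Qed.

Lemma coord_is_derive (x v : V) i j : is_derive x v (fun u : V => u i j) (v i j).
Proof.
have d := @derivable_id _ _ x v.
split; first by move/derivable_mxP: d; apply.
have := derive_mx d; rewrite derive_id => E. by rewrite {2}E mxE.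
Qed.

Lemma sqnorm_is_derive (x v : V) :
  is_derive x v (sqnorm (R:=R)) (\sum_(j < 3) (2%:R * x 0 j ^+ 1) *: v 0 j).
Proof.
rewrite sqnormE; apply: is_derive_sum => j.
have := @is_deriveX _ _ (fun u : V => u 0 j) 2 x v (v 0 j) (coord_is_derive x v 0 j).
done.
Qed.

Lemma sqnorm_diff (x : V) : differentiable (sqnorm (R:=R)) x.
Proof.
rewrite sqnormE; apply: differentiable_sum => j.
exact/differentiableX/differentiable_coord.
Qed.

Lemma inversion_diff (x : V) : sqnorm x != 0 -> differentiable (inversion (R:=R)) x.
Proof.
move=> hx.
have -> : inversion (R:=R) = \sum_(i < 1) \sum_(j < 3)
   (fun u : V => ((sqnorm u)^-1 * u i j) *: delta_mx i j).
  apply/funext => u; rewrite !fct_sumE [LHS]matrix_sum_delta.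
  apply: eq_bigr => i _; rewrite fct_sumE; apply: eq_bigr => j _.
  by rewrite /inversion mxE.
apply: differentiable_sum => i; apply: differentiable_sum => j.
apply: differentiableZl.
apply: (@differentiableM _ _ (fun u => (sqnorm u)^-1) (fun u : V => u i j)).
  exact: differentiableV (sqnorm_diff x) hx.
exact: differentiable_coord.
Qed.

Definition dsq (x v : V) : R := \sum_(j < 3) (2%:R * x 0 j ^+ 1) *: v 0 j.

Lemma dinv_entry (x v : V) i j : sqnorm x != 0 ->
  'd (inversion (R:=R)) x v i j =
  (sqnorm x)^-1 * v i j + x i j * (- (sqnorm x) ^- 2 * dsq x v).
Proof.
move=> hx.
rewrite -deriveE; last exact: inversion_diff.
rewrite derive_mx; last exact/diff_derivable/inversion_diff.
rewrite mxE.
have -> : (fun t : V => inversion t i j) =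
   (fun u => (sqnorm u)^-1) * (fun u : V => u i j).
  by apply/funext => u; rewrite /inversion mxE.
have dS : derivable (sqnorm (R:=R)) x v by case: (sqnorm_is_derive x v).
have dV : derivable (fun u : V => (sqnorm u)^-1) x v by exact: derivableV.
have dC : derivable (fun u : V => u i j) x v by case: (coord_is_derive x v i j).
rewrite deriveM // deriveV //.
have -> : 'D_v (sqnorm (R:=R)) x = dsq x v by case: (sqnorm_is_derive x v).
by have -> : 'D_v (fun u : V => u i j) x = v i j by case: (coord_is_derive x v i j).
Qed.

Lemma sum3 (f : 'I_3 -> R) : \sum_(j < 3) f j = f 0 + f 1 + f 2%:R.
Proof.
rewrite !big_ord_recl big_ord0 addr0 addrA.
congr (f _ + f _ + f _); exact/val_inj.
Qed.

Lemma mkvE e1 e2 e3 : [/\ mkv e1 e2 e3 0 0 = e1, mkv e1 e2 e3 0 1 = e2 & mkv e1 e2 e3 0 2%:R = e3 :> R].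
Proof. by rewrite /mkv !mxE. Qed.

Lemma G00 (a b c t : R) : t != 0 ->
  field_at_infinity (rossler a b c) (t *: mkv 1 0 1) 0 0 = - 2^-1 + (c - b) * t.
Proof.
move=> ht.
have yn0 : (t *: mkv 1 0 1 == 0) = false.
  apply/negbTE; apply/eqP => /matrixP /(_ 0 0); rewrite !mxE /= mulr1 => h.
  by rewrite h eqxx in ht.
rewrite /field_at_infinity yn0.
set y := t *: mkv 1 0 1.
have sy : sqnorm y = 2 * t ^+ 2.
  by rewrite /sqnorm sum3 !mxE /=; ring.
have t2 : t ^+ 2 != 0 by rewrite expf_neq0.
have sx : sqnorm (inversion y) = (2 * t ^+ 2)^-1.
  rewrite /sqnorm sum3 /inversion !mxE /= sy.
  by field.
rewrite (@dinv_entry (inversion y) (rossler a b c (inversion y)) 0 0); last by rewrite sx invr_eq0 mulf_neq0 //; apply/eqP; lra.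
rewrite sx /dsq sum3 /rossler /cx /cy /cz /inversion.
rewrite !mxE /= sy.
rewrite /GRing.scale /= !expr1 !mulr0 !mulr1. by field.
Qed.
End S.

Theorem lemma2p2 (R : realType) (P : set (R * R * R))
  (hPopen : open P) (hP : forall p, P p -> rossler_param_ok p)
  (a b c : R) (hp : P (a, b, c)) :
  ~ C1_at (field_at_infinity (rossler a b c)) 0.
Proof.
move=> [U [oU U0 dU _]].
set G := field_at_infinity (rossler a b c).
have G0 : G 0 = 0 by rewrite /G /field_at_infinity eqxx.
have cG := differentiable_continuous (dU 0 U0).
set w0 : 'rV[R]_3 := mkv 1 0 1.
have c1 : (fun t : R => t *: w0) @ (0 : R) --> (0 *: w0 : 'rV[R]_3).
  exact: scalel_continuous.
rewrite scale0r in c1.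
have c2 : G @ (0 : 'rV[R]_3) --> (0 : 'rV[R]_3) by rewrite -{2}G0; exact: cG.
have c3 : (fun M : 'rV[R]_3 => M 0 0) @ (0 : 'rV[R]_3) --> (0 : R).
  have e : (0 : 'rV[R]_3) 0 0 = 0 by rewrite mxE.
  by rewrite -[X in _ --> X]e; exact: coord_continuous.
have ch := cvg_comp _ _ c1 (cvg_comp _ _ c2 c3).
set h := ((fun M : 'rV[R]_3 => M 0 0) \o G) \o ( *:%R^~ w0).
have e0 : (0 : R) < 4^-1 by rewrite invr_gt0.
have N1 : \forall t \near (0:R), `|0 - h t| < 4^-1 by move/cvgrPdist_lt : ch; apply.
set k := (`|c - b| + 1)^-1 / 4.
have k0 : 0 < k by rewrite divr_gt0 // invr_gt0 ltr_wpDl.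
have N2 : \forall t \near (0:R), `|t| < k by exact: nbhs0_lt.
have [e ep He] := (nbhs_ballP _ _).1 (filterI N1 N2).
have t0 : 0 < e / 2 by rewrite divr_gt0.
have [h1 h2] : (fun t => `|0 - h t| < 4^-1) (e / 2) /\ (fun t => `|t| < k) (e / 2).
  apply: He; rewrite /ball /= sub0r normrN gtr0_norm //.
  by rewrite ltr_pdivrMr // ltr_pMr // ltr1n.
move: h1 h2; rewrite /h /= G00; last by rewrite gt_eqF.
move=> h1 h2.
set m := `|c - b|.
have m0 : 0 <= m by exact: normr_ge0.
have mk : m * k < 4^-1.
  have -> : m * k = (m / (m + 1)) * 4^-1 by rewrite /k; ring.
  rewrite -[X in _ < X]mul1r ltr_pM2r ?invr_gt0 //.
  have m1 : 0 < m + 1 by lra.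
  rewrite ltr_pdivrMr // mul1r; lra.
have hx : `|(c - b) * (e / 2)| < 4^-1.
  rewrite normrM; apply: le_lt_trans mk; apply: ler_wpM2l => //; exact: ltW.
move: h1 hx; rewrite sub0r normrN !ltr_norml.
lra.
Qed.
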